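(* Let $A=(a_{i,j})_{i,j\in\llbracket1,n\rrbracket}$ be a generalized Cartan matrix and $(\mathbb A,\Pi,\Pi^\vee)$ a generalized free realization of $A$. Let $W^v_{\mathbb A}$ be the subgroup of $GL(\mathbb A)$ generated by the reflections $r_i(v)=v-\alpha_i(v)\alpha_i^\vee$, and $Q^\vee_{\mathbb A}=\bigoplus_i\mathbb Z\alpha_i^\vee$. Then $W^v_{\mathbb A}$ stabilizes $Q^\vee_{\mathbb A}$ and the restriction map $W^v_{\mathbb A}\to\mathrm{Aut}_{\mathbb Z}(Q^\vee_{\mathbb A})$, $w\mapsto w|_{Q^\vee_{\mathbb A}}$, is injective.
   Context: A generalized Cartan matrix satisfies $a_{i,i}=2$, $a_{i,j}\in\mathbb Z_{\le0}$ for $i\ne j$, $a_{i,j}=0\iff a_{j,i}=0$. A generalized free realization of $A$ is a triple $(\mathbb A,\Pi,\Pi^\vee)$ with $\mathbb A$ a finite-dimensional real vector space, $\Pi=\{\alpha_1,\dots,\alpha_n\}\subset\mathbb A^*$ and $\Pi^\vee=\{\alpha_1^\vee,\dots,\alpha_n^\vee\}\subset\mathbb A$ both linearly independent families of cardinality $n$, with $\alpha_j(\alpha_i^\vee)=a_{i,j}$ for all $i,j$. *)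

(* Defs.v *)
(* The real vector space A of dimension m is modelled by
   row vectors 'rV[R]_m over an arbitrary real field R (covers the reals);
   linear forms on A are modelled by row vectors too, via the pairing
   alpha(v) = (v *m alpha^T) 0 0.  Endomorphisms act on the right: v *m w. *)
From HB Require Import structures.
From mathcomp Require Import all_boot all_order all_algebra.
Set Implicit Arguments. Unset Strict Implicit. Unset Printing Implicit Defensive.
Import Order.TTheory GRing.Theory Num.Theory.
Local Open Scope ring_scope.

Definition gen_cartan (n : nat) (A : 'M[int]_n) : Prop :=
  (forall i, A i i = 2) /\
  (forall i j, i != j -> A i j <= 0) /\
  (forall i j, A i j = 0 <-> A j i = 0).

(* generalized free realization: rows of [alphaM] are the alpha_i (in the dual of A),
   rows of [corM] are the alpha_i^vee (in A); both families linearly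
   independent, and alpha_j(alpha_i^vee) = a_{i,j}. *)
Definition gen_free_realization (R : realFieldType) (n m : nat)
  (A : 'M[int]_n) (alphaM corM : 'M[R]_(n, m)) : Prop :=
  row_free alphaM /\ row_free corM /\
  (forall i j, (corM *m alphaM^T) i j = (A i j)%:~R).

Definition refl_mx (R : realFieldType) (n m : nat) (alphaM corM : 'M[R]_(n, m))
  (i : 'I_n) : 'M[R]_m :=
  1%:M - (row i alphaM)^T *m row i corM.

Inductive in_Wv (R : realFieldType) (n m : nat) (alphaM corM : 'M[R]_(n, m))
  : 'M[R]_m -> Prop :=
| Wv_one : in_Wv alphaM corM 1%:M
| Wv_refl i : in_Wv alphaM corM (refl_mx alphaM corM i)
| Wv_mul w1 w2 : in_Wv alphaM corM w1 -> in_Wv alphaM corM w2 ->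
    in_Wv alphaM corM (w1 *m w2)
| Wv_inv w : in_Wv alphaM corM w -> in_Wv alphaM corM (invmx w).

Definition in_Qv (R : realFieldType) (n m : nat) (corM : 'M[R]_(n, m))
  (v : 'rV[R]_m) : Prop :=
  exists c : 'rV[int]_n, v = map_mx (fun z : int => z%:~R) c *m corM.

(* Main.v *)
Require Import Defs.
From HB Require Import structures.
From mathcomp Require Import all_boot all_order all_algebra.
From mathcomp Require Import ring lra zify.
Set Implicit Arguments. Unset Strict Implicit. Unset Printing Implicit Defensive.
Import Order.TTheory GRing.Theory Num.Theory.
Local Open Scope ring_scope.

Section Weyl.
Variables (R : realFieldType) (n m : nat) (A : 'M[int]_n) (alphaM corM : 'M[R]_(n, m)).
Hypothesis hA : gen_cartan A.
Hypothesis hfree : row_free corM.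
Hypothesis hpair : forall i j, (corM *m alphaM^T) i j = (A i j)%:~R.

Local Notation refl := (refl_mx alphaM corM).
Definition co i : 'rV[R]_m := row i corM.
Definition dot (v : 'rV[R]_m) (i : 'I_n) : R := (v *m (row i alphaM)^T) 0 0.

Lemma reflE v i : v *m refl i = v - dot v i *: co i.
Proof.
by rewrite /refl_mx mulmxBr mulmx1 mulmxA [v *m _]mx11_scalar mul_scalar_mx.
Qed.

Lemma dotD v w i : dot (v + w) i = dot v i + dot w i.
Proof. by rewrite /dot mulmxDl mxE. Qed.
Lemma dotZ a v i : dot (a *: v) i = a * dot v i.
Proof. by rewrite /dot -scalemxAl mxE. Qed.
Lemma dotN v i : dot (- v) i = - dot v i.
Proof. by rewrite -scaleN1r dotZ mulN1r. Qed.
Lemma dotB v w i : dot (v - w) i = dot v i - dot w i.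
Proof. by rewrite dotD dotN. Qed.
Lemma dot0 i : dot 0 i = 0.
Proof. by rewrite /dot mul0mx mxE. Qed.

Lemma dot_co k i : dot (co k) i = (A k i)%:~R.
Proof.
rewrite /dot /co -hpair !mxE; apply: eq_bigr => l _; by rewrite !mxE.
Qed.

Lemma dot_cc i : dot (co i) i = 2.
Proof. by rewrite dot_co hA.1. Qed.

Lemma mx_ext (M N : 'M[R]_m) : (forall v : 'rV_m, v *m M = v *m N) -> M = N.
Proof. by move=> H; apply/row_matrixP => r; rewrite !rowE H. Qed.

Lemma refl_invol i : refl i *m refl i = 1%:M.
Proof.
apply: mx_ext => v; rewrite mulmx1 mulmxA !reflE dotB dotZ dot_cc.
rewrite -addrA -opprD -scalerDl.
have -> : dot v i + (dot v i - dot v i * 2) = 0 by ring.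
by rewrite scale0r subr0.
Qed.

Definition ev (s : seq 'I_n) : 'M[R]_m := foldr (fun k M => refl k *m M) 1%:M s.

Lemma ev_cons k s : ev (k :: s) = refl k *m ev s. Proof. by []. Qed.
Lemma ev_cat s1 s2 : ev (s1 ++ s2) = ev s1 *m ev s2.
Proof. elim: s1 => [|k s IH] /=; first by rewrite mul1mx. by rewrite IH mulmxA. Qed.

Lemma ev_rev s : ev s *m ev (rev s) = 1%:M.
Proof.
elim: s => [|k s IH]; first by rewrite mulmx1.
rewrite rev_cons -cats1 ev_cat ev_cons /= mulmx1.
by rewrite -mulmxA [ev s *m _]mulmxA IH mul1mx refl_invol.
Qed.

Lemma ev_rev' s : ev (rev s) *m ev s = 1%:M.
Proof. by rewrite -{2}(revK s) ev_rev. Qed.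

Lemma ev_unit s : ev s \in unitmx.
Proof. by case: (mulmx1_unit (ev_rev s)). Qed.

Lemma Wv_ev w : in_Wv alphaM corM w -> exists s, w = ev s.
Proof.
elim => [|i|w1 w2 _ [s1 ->] _ [s2 ->]|w0 _ [s ->]].
- by exists [::].
- by exists [:: i]; rewrite /= mulmx1.
- by exists (s1 ++ s2); rewrite ev_cat.
- exists (rev s); have := mulKmx (ev_unit s) (ev (rev s)); by rewrite ev_rev mulmx1.
Qed.

Lemma inQ_refl v i : in_Qv corM v -> in_Qv corM (v *m refl i).
Proof.
case=> c ->; rewrite reflE.
exists (c - ((c *m A) 0 i) *: delta_mx 0 i).
rewrite -[fun z : int => _]/(intmul (1:R)) map_mxD map_mxN map_mxZ mulmxBl.
congr (_ - _); rewrite -scalemxAl; congr (_ *: _); last by rewrite map_delta_mx -rowE.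
rewrite /dot -mulmxA mxE (_ : (c *m A) 0 i = \sum_l c 0 l * A l i); last by rewrite mxE.
rewrite rmorph_sum; apply: eq_bigr => l _.
rewrite !mxE rmorphM /=; congr (_ * _); rewrite -hpair !mxE; apply: eq_bigr => k _.
by rewrite !mxE.
Qed.

Lemma inQ_refl_iff v i : in_Qv corM v <-> in_Qv corM (v *m refl i).
Proof.
split; first exact: inQ_refl.
by move/(inQ_refl i); rewrite -mulmxA refl_invol mulmx1.
Qed.

Lemma inQ_ev v s : in_Qv corM v <-> in_Qv corM (v *m ev s).
Proof.
elim: s v => [|k s IH] v /=; first by rewrite mulmx1.
by rewrite mulmxA -IH -inQ_refl_iff.
Qed.

Lemma co_inQ i : in_Qv corM (co i).
Proof.
exists (delta_mx 0 i).
by rewrite -[fun z : int => _]/(intmul (1:R)) map_delta_mx -rowE.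
Qed.

Lemma det_rank1 (a : 'M[R]_(m,1)) (c : 'M[R]_(1,m)) :
  \det (1%:M + a *m c) = 1 + (c *m a) 0 0.
Proof.
have E1 : block_mx 1%:M (-a) c 1%:M =
   block_mx 1%:M 0 c 1%:M *m block_mx 1%:M (-a) 0 (1%:M + c *m a).
  rewrite mulmx_block; congr block_mx;
  rewrite ?mulmx1 ?mul1mx ?mulmx0 ?mul0mx ?addr0 ?add0r ?mulmxN ?mulNmx //.
  by rewrite addrCA addNr addr0.
have E2 : block_mx 1%:M (-a) c 1%:M =
   block_mx (1%:M + a *m c) (-a) 0 1%:M *m block_mx 1%:M 0 c 1%:M.
  rewrite mulmx_block; congr block_mx;
  rewrite ?mulmx1 ?mul1mx ?mulmx0 ?mul0mx ?addr0 ?add0r ?mulmxN ?mulNmx //.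
  by rewrite addrK.
have := congr1 determinant E2; rewrite {1}E1 !det_mulmx det_lblock det_ublock.
rewrite !det1 !mul1r mulr1 det_ublock det1 mulr1 det_mx11 => <-.
by rewrite !mxE eqxx.
Qed.

Lemma det_refl i : \det (refl i) = -1.
Proof.
rewrite /refl_mx -mulNmx det_rank1 mulmxN mxE.
have -> : (co i *m (row i alphaM)^T) 0 0 = 2 by rewrite -[LHS]/(dot (co i) i) dot_cc.
have -> : (1 : R) + - 2 = -1 by ring.
by [].
Qed.

Lemma det_ev s : \det (ev s) = (-1) ^+ size s.
Proof.
elim: s => [|k s IH] /=; first by rewrite det1 expr0.
by rewrite det_mulmx det_refl IH exprS.
Qed.

Definition lwP s k : bool := [exists t : k.-tuple 'I_n, ev t == ev s].
Lemma lw_ex s : exists k, lwP s k.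
Proof. by exists (size s); apply/existsP; exists (in_tuple s). Qed.
Definition lw s := ex_minn (lw_ex s).

Lemma lw_min s t : ev t = ev s -> (lw s <= size t)%N.
Proof.
move=> e; rewrite /lw; case: ex_minnP => k _ H; apply: H.
by apply/existsP; exists (in_tuple t); rewrite /= e.
Qed.

Lemma lw_wit s : exists2 t, size t = lw s & ev t = ev s.
Proof.
rewrite /lw; case: ex_minnP => k /existsP [t /eqP e] _.
by exists t; rewrite ?size_tuple.
Qed.

Lemma lw_size s : (lw s <= size s)%N.
Proof. exact: lw_min. Qed.

Lemma lw_ev s s' : ev s = ev s' -> lw s = lw s'.
Proof.
move=> e; apply/eqP; rewrite eqn_leq.
case: (lw_wit s) => t1 h1 e1; case: (lw_wit s') => t2 h2 e2.
have a1 := lw_min (s:=s) (t:=t2) (etrans e2 (esym e)).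
have b1 := lw_min (s:=s') (t:=t1) (etrans e1 e).
rewrite h2 in a1; rewrite h1 in b1; by rewrite a1 b1.
Qed.

Lemma lw_cat s1 s2 : (lw (s1 ++ s2) <= lw s1 + lw s2)%N.
Proof.
case: (lw_wit s1) => t1 <- e1; case: (lw_wit s2) => t2 <- e2.
by rewrite -size_cat lw_min // !ev_cat e1 e2.
Qed.

Lemma lw_cons k s : (lw (k :: s) <= (lw s).+1)%N.
Proof.
have h1 := lw_cat [:: k] s; have h2 := lw_size [:: k]; simpl in h1, h2; lia.
Qed.

Lemma ev_kk k s : ev (k :: k :: s) = ev s.
Proof. by rewrite /= mulmxA refl_invol mul1mx. Qed.

Lemma lw_cons2 k s : (lw s <= (lw (k :: s)).+1)%N.
Proof. by rewrite -(lw_ev (ev_kk k s)) lw_cons. Qed.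

Lemma det_lw s : \det (ev s) = (-1) ^+ lw s.
Proof. by case: (lw_wit s) => t <- <-; rewrite det_ev. Qed.

Lemma lw_cons_neq k s : lw (k :: s) != lw s.
Proof.
apply/eqP => E.
have := det_lw (k :: s); rewrite /= det_mulmx det_refl det_lw E.
rewrite -signr_odd; case: odd; rewrite ?expr0 ?expr1 => h; clear E; lra.
Qed.

Lemma lw_cons_le k s : (lw (k :: s) <= lw s)%N -> (lw (k :: s)).+1 = lw s.
Proof.
move=> h; have h2 := lw_cons2 k s; have h3 := lw_cons_neq k s.
apply/eqP; rewrite eqn_leq h2 andbT ltn_neqAle h3 h.
by [].
Qed.

Lemma lw0 s : lw s = 0%N -> ev s = 1%:M.
Proof. move=> h; case: (lw_wit s) => t; rewrite h; by case: t => //= _ <-. Qed.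

Definition pos (v : 'rV[R]_m) :=
  exists2 d : 'rV[R]_n, (forall l, 0 <= d 0 l) & v = d *m corM.

Lemma pos_co i : pos (co i).
Proof. by exists (delta_mx 0 i); [move=> l; rewrite mxE ler0n | rewrite -rowE]. Qed.

Lemma pos_comb x y u w : 0 <= x -> 0 <= y -> pos u -> pos w ->
  pos (x *: u + y *: w).
Proof.
move=> hx hy [d1 h1 ->] [d2 h2 ->]; exists (x *: d1 + y *: d2).
  by move=> l; rewrite !mxE addr_ge0 // mulr_ge0.
by rewrite mulmxDl -!scalemxAl.
Qed.

Lemma pos_negco i : ~ pos (- co i).
Proof.
case=> d hd e.
have : (d + delta_mx 0 i) *m corM = 0 *m corM.
  by rewrite mulmxDl -e -rowE addNr mul0mx.
move/(row_free_inj hfree)/matrixP/(_ 0 i); rewrite !mxE !eqxx /=.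
have := hd i; lra.
Qed.

Lemma red_sorted_aux s : ~~ sorted (fun a b => a != b) s ->
  exists2 t, ev t = ev s & (size t).+2 = size s :> nat.
Proof.
elim: s => [|a s IH] //=; case: s IH => [|b s] IH //=.
have [->|nab] := eqVneq a b.
  by move=> _; apply: (ex_intro2 _ _ s) => //; rewrite mulmxA refl_invol mul1mx.
rewrite /= => hp.
case: (IH hp) => t e hs; apply: (ex_intro2 _ _ (a :: t)); by rewrite /= ?e ?hs.
Qed.

Lemma red_sorted s : lw s = size s -> sorted (fun a b => a != b) s.
Proof.
move=> h; apply/negPn/negP => /red_sorted_aux [t e hs].
have := lw_min e; rewrite h -hs; lia.
Qed.

Fixpoint alt (a b : 'I_n) (k : nat) : seq 'I_n :=
  if k is k'.+1 then a :: alt b a k' else [::].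

Lemma size_alt a b k : size (alt a b k) = k.
Proof. by elim: k a b => [|k IH] a b //=; rewrite IH. Qed.

Lemma alt_split x y a b : alt a b (x + y) =
  alt a b x ++ alt (if odd x then b else a) (if odd x then a else b) y.
Proof.
elim: x a b => [|x IH] a b //=; rewrite IH; by case: (odd x).
Qed.

Lemma combi (z u w : 'rV[R]_m) x y d :
  z + x *: u + y *: w - d *: u = z + (x - d) *: u + y *: w.
Proof. by rewrite scalerBl !addrA [in LHS]addrAC. Qed.

Lemma combj (z u w : 'rV[R]_m) x y d :
  z + x *: u + y *: w - d *: w = z + x *: u + (y - d) *: w.
Proof. by rewrite scalerBl !addrA. Qed.

Lemma alt_struct w c d : c != d -> all (fun k => (k == c) || (k == d)) w ->
  sorted (fun a b => a != b) w -> ohead w != Some d -> w = alt c d (size w).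
Proof.
elim: w c d => [|a w IH] c d //= hcd /andP [ha hall] hs hh.
have ac : a = c.
  move: ha; case: eqP => // _ /= /eqP ad; by rewrite ad eqxx in hh.
subst a; congr (_ :: _); apply: IH; first by rewrite eq_sym.
- by apply: sub_all hall => k; rewrite orbC.
- exact: path_sorted hs.
- case: w hs {hall} => //= b w /andP [hcb _]; apply/eqP => -[eb].
  by rewrite eb eqxx in hcb.
Qed.

Lemma int_split (x : int) : 4 <= x \/ x <= 3.
Proof. lia. Qed.

Lemma int_cases (a b : int) : a <= 0 -> b <= 0 -> (a = 0 -> b = 0) -> (b = 0 -> a = 0) ->
  a * b <= 3 ->
  (a = 0 /\ b = 0) \/ (a = -1 /\ b = -1) \/
  (a = -1 /\ b = -2) \/ (a = -2 /\ b = -1) \/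
  (a = -1 /\ b = -3) \/ (a = -3 /\ b = -1).
Proof. move=> *; nia. Qed.

Section Rank2.
Variables i j : 'I_n.
Hypothesis hij : i != j.

Local Notation P := (- (A i j)%:~R : R).
Local Notation Q := (- (A j i)%:~R : R).
Local Notation isij := (fun k : 'I_n => (k == i) || (k == j)).

Lemma hji : (j == i) = false.
Proof. by rewrite eq_sym (negbTE hij). Qed.

Definition stepf (k : 'I_n) (xy : R * R) : R * R :=
  if k == i then (Q * xy.2 - xy.1, xy.2) else (xy.1, P * xy.1 - xy.2).

Definition run (s : seq 'I_n) (xy : R * R) := foldl (fun xy k => stepf k xy) xy s.

Lemma step_ok k z x y : isij k -> dot z i = 0 -> dot z j = 0 ->
  (z + x *: co i + y *: co j) *m refl k =
  z + (stepf k (x, y)).1 *: co i + (stepf k (x, y)).2 *: co j.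
Proof.
move=> hk hzi hzj; rewrite reflE /stepf.
have [->|nki] := eqVneq k i.
  rewrite /= !dotD !dotZ hzi dot_cc dot_co combi; congr (_ + _ *: _ + _); ring.
move: hk; rewrite (negbTE nki) /= => /eqP ->.
rewrite !dotD !dotZ hzj dot_cc dot_co combj; congr (_ + _ + _ *: _); ring.
Qed.

Lemma run_ok s z x y : all isij s -> dot z i = 0 -> dot z j = 0 ->
  (z + x *: co i + y *: co j) *m ev s =
  z + (run s (x, y)).1 *: co i + (run s (x, y)).2 *: co j.
Proof.
elim: s x y => [|k s IH] x y /=; first by rewrite mulmx1.
case/andP=> hk hs hzi hzj; rewrite mulmxA step_ok // IH //.
by case: (stepf k (x, y)).
Qed.

Lemma all_alt k a b : isij a -> isij b -> all isij (alt a b k).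
Proof. by elim: k a b => [|k IH] a b ha hb //=; rewrite ha IH. Qed.

Lemma decomp (hD : 4 - P * Q != 0) (v : 'rV[R]_m) :
  exists z x y, [/\ v = z + x *: co i + y *: co j, dot z i = 0 & dot z j = 0].
Proof.
set a := dot v i; set b := dot v j; set D := 4 - P * Q.
set x := (2 * a + Q * b) / D; set y := (2 * b + P * a) / D.
exists (v - (x *: co i + y *: co j)), x, y; split.
- by rewrite -addrA subrK.
- rewrite dotB dotD !dotZ dot_cc dot_co -/a /x /y /D; move: hD; clearbody a b.
  move=> hD; field; exact: hD.
- rewrite dotB dotD !dotZ dot_cc dot_co -/b /x /y /D; move: hD; clearbody a b.
  move=> hD; field; exact: hD.
Qed.

Definition nn (xy : R * R) := 0 <= xy.1 /\ 0 <= xy.2.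

Lemma isij_i : isij i. Proof. by rewrite /= eqxx. Qed.
Lemma isij_j : isij j. Proof. by rewrite /= eqxx orbT. Qed.

Lemma braid M (hD : 4 - P * Q != 0)
  (hb : forall xy, run (alt i j M) xy = run (alt j i M) xy) :
  ev (alt i j M) = ev (alt j i M).
Proof.
apply: mx_ext => v; case: (decomp hD v) => z [x [y [-> hzi hzj]]].
by rewrite !run_ok ?hb // all_alt ?isij_i ?isij_j.
Qed.

Lemma fin_case M w (hD : 4 - P * Q != 0)
  (hb : forall xy, run (alt i j M.+1) xy = run (alt j i M.+1) xy)
  (hp : forall k, (k <= M)%N -> nn (run (alt j i k) (1, 0)))
  (hw : w = alt j i (size w)) (hl : (size w < lw (i :: w))%N) :
  nn (run w (1, 0)).
Proof.
rewrite hw; case: (leqP (size w) M) => hk; first exact: hp.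
exfalso; move: hw hl hk; set k := size w => hw hl hk.
have E : i :: w = alt i j (M.+2 + (k - M.+1)).
  by rewrite addSn subnKC // {1}hw.
rewrite alt_split in E.
have Eb : ev (alt i j M.+2) = ev (alt j i M).
  by rewrite [alt i j M.+2]/= ev_cons -(braid hD hb) /= mulmxA refl_invol mul1mx.
have h : (lw (i :: w) <= size (alt j i M ++
   alt (if odd M.+2 then j else i) (if odd M.+2 then i else j) (k - M.+1)))%N.
  by apply: lw_min; rewrite E !ev_cat Eb.
move: h; rewrite size_cat !size_alt; lia.
Qed.

Lemma inf_pos (h0P : 0 <= P) (h0Q : 0 <= Q) (h4 : 4 <= P * Q) k :
  forall x y,
  ((0 <= x /\ 0 <= y /\ 2 * y <= P * x) -> nn (run (alt j i k) (x, y))) /\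
  ((0 <= x /\ 0 <= y /\ 2 * x <= Q * y) -> nn (run (alt i j k) (x, y))).
Proof.
elim: k => [|k IH] x y; first by split => -[hx [hy _]].
split => -[hx [hy hxy]] /=; rewrite /stepf ?eqxx ?hji /=.
- apply: (IH _ _).2.
  have h1 : 0 <= Q * (P * x - 2 * y) by apply: mulr_ge0 => //; lra.
  have h2 : 0 <= (P * Q - 4) * x by apply: mulr_ge0 => //; lra.
  split; [lra|split; [lra|nra]].
- apply: (IH _ _).1.
  have h1 : 0 <= P * (Q * y - 2 * x) by apply: mulr_ge0 => //; lra.
  have h2 : 0 <= (P * Q - 4) * y by apply: mulr_ge0 => //; lra.
  split; [lra|split; [lra|nra]].
Qed.


Ltac crun := rewrite /run /stepf /= ?eqxx ?hji /=.

Lemma fin0 w : P = 0 -> Q = 0 -> w = alt j i (size w) ->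
  (size w < lw (i :: w))%N -> nn (run w (1, 0)).
Proof.
move=> hP hQ hw hl.
apply: (fin_case (M := 1%N)) hw hl.
+ by rewrite hP hQ; apply/eqP => h; lra.
+ by case=> x y; crun; rewrite hP hQ; congr (_, _); ring.
+ move=> k hk; do 2 (case: k hk => [|k] hk; first by crun; rewrite /nn /= ?hP ?hQ; split; lra).
  by [].
Qed.

Lemma fin1 w : P = 1 -> Q = 1 -> w = alt j i (size w) ->
  (size w < lw (i :: w))%N -> nn (run w (1, 0)).
Proof.
move=> hP hQ hw hl.
apply: (fin_case (M := 2%N)) hw hl.
+ by rewrite hP hQ; apply/eqP => h; lra.
+ by case=> x y; crun; rewrite hP hQ; congr (_, _); ring.
+ move=> k hk; do 3 (case: k hk => [|k] hk; first by crun; rewrite /nn /= ?hP ?hQ; split; lra).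
  by [].
Qed.

Lemma fin2 w : P = 1 -> Q = 2 -> w = alt j i (size w) ->
  (size w < lw (i :: w))%N -> nn (run w (1, 0)).
Proof.
move=> hP hQ hw hl.
apply: (fin_case (M := 3%N)) hw hl.
+ by rewrite hP hQ; apply/eqP => h; lra.
+ by case=> x y; crun; rewrite hP hQ; congr (_, _); ring.
+ move=> k hk; do 4 (case: k hk => [|k] hk; first by crun; rewrite /nn /= ?hP ?hQ; split; lra).
  by [].
Qed.

Lemma fin3 w : P = 2 -> Q = 1 -> w = alt j i (size w) ->
  (size w < lw (i :: w))%N -> nn (run w (1, 0)).
Proof.
move=> hP hQ hw hl.
apply: (fin_case (M := 3%N)) hw hl.
+ by rewrite hP hQ; apply/eqP => h; lra.
+ by case=> x y; crun; rewrite hP hQ; congr (_, _); ring.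
+ move=> k hk; do 4 (case: k hk => [|k] hk; first by crun; rewrite /nn /= ?hP ?hQ; split; lra).
  by [].
Qed.

Lemma fin4 w : P = 1 -> Q = 3 -> w = alt j i (size w) ->
  (size w < lw (i :: w))%N -> nn (run w (1, 0)).
Proof.
move=> hP hQ hw hl.
apply: (fin_case (M := 5%N)) hw hl.
+ by rewrite hP hQ; apply/eqP => h; lra.
+ by case=> x y; crun; rewrite hP hQ; congr (_, _); ring.
+ move=> k hk; do 6 (case: k hk => [|k] hk; first by crun; rewrite /nn /= ?hP ?hQ; split; lra).
  by [].
Qed.

Lemma fin5 w : P = 3 -> Q = 1 -> w = alt j i (size w) ->
  (size w < lw (i :: w))%N -> nn (run w (1, 0)).
Proof.
move=> hP hQ hw hl.
apply: (fin_case (M := 5%N)) hw hl.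
+ by rewrite hP hQ; apply/eqP => h; lra.
+ by case=> x y; crun; rewrite hP hQ; congr (_, _); ring.
+ move=> k hk; do 6 (case: k hk => [|k] hk; first by crun; rewrite /nn /= ?hP ?hQ; split; lra).
  by [].
Qed.

Lemma rank2 w : all isij w -> lw w = size w -> (size w < lw (i :: w))%N ->
  exists x y, [/\ 0 <= x, 0 <= y & co i *m ev w = x *: co i + y *: co j].
Proof.
move=> hall hred hl.
have hs := red_sorted hred.
have hh : ohead w != Some i.
  case: w hall hred hl {hs} => //= a w _ _ hl; apply/eqP => -[ea]; subst a.
  have := lw_size w; rewrite -(lw_ev (ev_kk i w)) => h.
  move: hl h; clear; rewrite /=; lia.
have hw : w = alt j i (size w).
  apply: alt_struct; [by rewrite eq_sym | | exact: hs | exact: hh].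
  by apply: sub_all hall => k; rewrite orbC.
have E : co i *m ev w = (run w (1, 0)).1 *: co i + (run w (1, 0)).2 *: co j.
  have := run_ok (z := 0) 1 0 hall (dot0 i) (dot0 j).
  by rewrite add0r scale1r scale0r addr0 => ->; rewrite add0r.
suff [h1 h2] : nn (run w (1, 0)) by exists (run w (1, 0)).1, (run w (1, 0)).2.
have hAij : A i j <= 0 := hA.2.1 i j hij.
have hAji : A j i <= 0 := hA.2.1 j i (negbT hji).
have [h00a h00b] := hA.2.2 i j.
have [h4|h3] : (4 <= A i j * A j i) \/ (A i j * A j i <= 3) by apply: int_split.
  rewrite hw; apply: (inf_pos _ _ _ _ _ _).1.
  - by rewrite oppr_ge0 lerz0.
  - by rewrite oppr_ge0 lerz0.
  - by rewrite mulrNN -intrM (_ : 4 = 4%:~R) // ler_int.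
  - split; first lra; split; first lra.
    have : 0 <= P by rewrite oppr_ge0 lerz0.
    lra.
have : (A i j = 0 /\ A j i = 0) \/ (A i j = -1 /\ A j i = -1) \/
  (A i j = -1 /\ A j i = -2) \/ (A i j = -2 /\ A j i = -1) \/
  (A i j = -1 /\ A j i = -3) \/ (A i j = -3 /\ A j i = -1).
  by apply: int_cases.
case=> [[e1 e2]|[[e1 e2]|[[e1 e2]|[[e1 e2]|[[e1 e2]|[e1 e2]]]]]].
- have hP : P = 0 by rewrite e1 oppr0.
  have hQ : Q = 0 by rewrite e2 oppr0.
  exact: (fin0 hP hQ hw hl).
- have hP : P = 1 by rewrite e1 intrN opprK.
  have hQ : Q = 1 by rewrite e2 intrN opprK.
  exact: (fin1 hP hQ hw hl).
- have hP : P = 1 by rewrite e1 intrN opprK.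
  have hQ : Q = 2 by rewrite e2 intrN opprK.
  exact: (fin2 hP hQ hw hl).
- have hP : P = 2 by rewrite e1 intrN opprK.
  have hQ : Q = 1 by rewrite e2 intrN opprK.
  exact: (fin3 hP hQ hw hl).
- have hP : P = 1 by rewrite e1 intrN opprK.
  have hQ : Q = 3 by rewrite e2 intrN opprK.
  exact: (fin4 hP hQ hw hl).
- have hP : P = 3 by rewrite e1 intrN opprK.
  have hQ : Q = 1 by rewrite e2 intrN opprK.
  exact: (fin5 hP hQ hw hl).
Qed.



End Rank2.



Definition Sdef i j y K w y' :=
  [/\ all (fun l => (l == i) || (l == j)) w, ev y = ev w *m ev y' &
       (size w + lw y')%N = K].

Lemma S_step i j y K w y' a : (a == i) || (a == j) -> Sdef i j y K w y' ->
  (lw (a :: y') <= lw y')%N ->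
  Sdef i j y K (rcons w a) (a :: y') /\ (lw (a :: y')).+1 = lw y'.
Proof.
move=> ha [hall he hs] hl; have e := lw_cons_le hl; split => //; split.
- by rewrite all_rcons ha.
- by rewrite -cats1 ev_cat /= mulmx1 -mulmxA (mulmxA (refl a)) refl_invol mul1mx.
- by rewrite size_rcons -hs -e addSnnS.
Qed.

Lemma descent i j y K k' : forall w y', Sdef i j y K w y' -> lw y' = k' ->
  exists w2 y2, [/\ Sdef i j y K w2 y2, (lw y2 <= k')%N,
                  (lw y2 < lw (i :: y2))%N & (lw y2 < lw (j :: y2))%N].
Proof.
elim/ltn_ind: k' => k' IH w y' hS hk'.
case: (ltnP (lw y') (lw (i :: y'))) => hi.
  case: (ltnP (lw y') (lw (j :: y'))) => hj.
    by exists w, y'; split => //; rewrite hk'.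
  have hja : (j == i) || (j == j) by rewrite eqxx orbT.
  have [hS' e] := S_step hja hS hj.
  have [|w2 [y2 [h1 h2 h3 h4]]] := IH (lw (j :: y')) _ _ _ hS' erefl.
    by rewrite -hk' -e.
  by exists w2, y2; split => //; apply: (leq_trans h2); rewrite -hk' -e.
have hia : (i == i) || (i == j) by rewrite eqxx.
have [hS' e] := S_step hia hS hi.
have [|w2 [y2 [h1 h2 h3 h4]]] := IH (lw (i :: y')) _ _ _ hS' erefl.
  by rewrite -hk' -e.
by exists w2, y2; split => //; apply: (leq_trans h2); rewrite -hk' -e ltnW.
Qed.

Lemma mainT k : forall y i, lw y = k -> (lw y < lw (i :: y))%N ->
  pos (co i *m ev y).
Proof.
elim/ltn_ind: k => k IH y i hk hlt.
case: k IH hk => [|k] IH hk.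
  by rewrite (lw0 hk) mulmx1; apply: pos_co.
case: (lw_wit y) => t; rewrite hk; case: t => [//|j t'] hs het.
have hst : size t' = k by case: hs.
have hlt' : lw t' = k.
  have h1 := lw_size t'; have h2 := lw_cons j t'.
  rewrite (lw_ev het) hk hst in h1 h2 *; apply/eqP; rewrite eqn_leq h1 /=.
  by rewrite -ltnS.
have hij : i != j.
  apply/eqP => eji; subst j.
  have : lw (i :: y) = lw t' by apply: lw_ev; rewrite /= -het /= mulmxA refl_invol mul1mx.
  move=> e; move: hlt; rewrite e hlt' hk; by rewrite ltnNge leqnSn.
have hS0 : Sdef i j y k.+1 [:: j] t'.
  split => /=; first by rewrite eqxx orbT.
  - by rewrite -het /= mulmx1.
  - by rewrite hlt'.
have [w2 [y2 [[hall he hs2] h2 h3 h4]]] := descent hS0 hlt'.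
have IHi := IH _ (leq_ltn_trans h2 (ltnSn k)) y2 i erefl h3.
have IHj := IH _ (leq_ltn_trans h2 (ltnSn k)) y2 j erefl h4.
have hy : lw y = lw (w2 ++ y2) by apply: lw_ev; rewrite ev_cat he.
have hred : lw w2 = size w2.
  have := lw_cat w2 y2; have := lw_size w2; rewrite -hy hk -hs2 => a b.
  apply/eqP; rewrite eqn_leq a /=; by rewrite -(leq_add2r (lw y2)).
have hl : (size w2 < lw (i :: w2))%N.
  have : lw (i :: y) = lw ((i :: w2) ++ y2) by apply: lw_ev; rewrite ev_cat /= he mulmxA.
  move=> e; have := lw_cat (i :: w2) y2; rewrite -e.
  move: hlt; rewrite hk -hs2 => hlt b.
  by rewrite -(ltn_add2r (lw y2)) (leq_trans hlt b).
have [x [z [hx hz E]]] := rank2 hij hall hred hl.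
by rewrite he mulmxA E mulmxDl -!scalemxAl; apply: pos_comb.
Qed.

Lemma fix_id s : (forall k, co k *m ev s = co k) -> ev s = 1%:M.
Proof.
move=> hfix; case hk: (lw s) => [|k]; first exact: lw0.
case: (lw_wit s) => t; rewrite hk; case: t => [//|i t'] hs het.
have hst : size t' = k by case: hs.
have hlt' : lw t' = k.
  have h1 := lw_size t'; have h2 := lw_cons i t'.
  rewrite (lw_ev het) hk hst in h1 h2 *; apply/eqP; rewrite eqn_leq h1 /=.
  by rewrite -ltnS.
have hlt : (lw t' < lw (i :: t'))%N by rewrite (lw_ev het) hk hlt'.
have hpos := mainT erefl hlt.
have := hfix i; rewrite -het /= mulmxA reflE dot_cc.
have -> : co i - 2 *: co i = - co i.
  by rewrite -{1}(scale1r (co i)) -scalerBl -scaleN1r; congr (_ *: _); ring.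
rewrite mulNmx => e; apply: False_ind; apply: (@pos_negco i).
by rewrite -{1}e opprK.
Qed.

Lemma main_sec :
  (forall w, in_Wv alphaM corM w ->
     w \in unitmx /\
     (forall v : 'rV[R]_m, in_Qv corM v <-> in_Qv corM (v *m w))) /\
  (forall w1 w2, in_Wv alphaM corM w1 -> in_Wv alphaM corM w2 ->
     (forall v : 'rV[R]_m, in_Qv corM v -> v *m w1 = v *m w2) -> w1 = w2).
Proof.
split.
- move=> w /Wv_ev [s ->]; split; [exact: ev_unit | move=> v; exact: inQ_ev].
- move=> w1 w2 /Wv_ev [s1 ->] /Wv_ev [s2 ->] hQ.
  have h : ev (s1 ++ rev s2) = 1%:M.
    apply: fix_id => k; rewrite ev_cat mulmxA hQ; last exact: co_inQ.
    by rewrite -mulmxA ev_rev mulmx1.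
  by rewrite -[LHS]mulmx1 -(ev_rev' s2) mulmxA -ev_cat h mul1mx.
Qed.

End Weyl.

Theorem mainTheorem11 (R : realFieldType) (n m : nat) (A : 'M[int]_n)
  (alphaM corM : 'M[R]_(n, m)) :
  gen_cartan A ->
  gen_free_realization A alphaM corM ->
  (forall w, in_Wv alphaM corM w ->
     w \in unitmx /\
     (forall v : 'rV[R]_m, in_Qv corM v <-> in_Qv corM (v *m w))) /\
  (forall w1 w2, in_Wv alphaM corM w1 -> in_Wv alphaM corM w2 ->
     (forall v : 'rV[R]_m, in_Qv corM v -> v *m w1 = v *m w2) -> w1 = w2).
Proof.
move=> hA [_ [hfree hpair]].
exact: (@main_sec R n m A alphaM corM hA hfree hpair).
Qed.
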